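(* Let $\mathbf{V}$ be a variety of interior algebras such that the restriction of $\mathcal{O}$ to $\mathbf{V}$ is a full functor, and let $B$ be projective in $\mathbf{V}$. Then $\mathcal{O}(B)$ is projective in $\gamma(\mathbf{V})$.
   Context: An interior algebra $\langle B,g\rangle$ is a Boolean algebra with an operator $g$ satisfying $g(1)=1$, $g(xy)=g(x)g(y)$, $g(x)\le x$, $gg(x)=g(x)$; $a$ is open if $g(a)=a$. $\mathcal{O}(B)=B^\circ$ is the Heyting algebra of open elements with $a\Rightarrow b=g(-a+b)$; $\mathcal{O}(h)$ is the restriction of a homomorphism $h$ to open elements. $\gamma(\mathbf{V})=\{\mathcal{O}(A):A\in\mathbf{V}\}$. $\mathcal{O}$ restricted to $\mathbf{V}$ is full if for all $A,B\in\mathbf{V}$ every Heyting homomorphism $\mathcal{O}(A)\to\mathcal{O}(B)$ is $\mathcal{O}(h)$ for some homomorphism $h\colon A\to B$. *)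

(* Defs.v *)
(* Boolean algebras are MathComp's complemented distributive
   lattices (ctbDistrLatticeType). *)
From HB Require Import structures.
From mathcomp Require Import all_boot all_order.
Set Implicit Arguments. Unset Strict Implicit. Unset Printing Implicit Defensive.
Import Order.Theory.
Local Open Scope order_scope.

Record interior_algebra := IAlg {
  ia_disp : Order.disp_t;
  ia_car :> ctbDistrLatticeType ia_disp;
  ia_g : ia_car -> ia_car;
  ia_g1 : ia_g \top = \top;
  ia_gM : forall x y, ia_g (x `&` y) = ia_g x `&` ia_g y;
  ia_gle : forall x, ia_g x <= x;
  ia_gg : forall x, ia_g (ia_g x) = ia_g x }.

Arguments ia_g {_}.

Definition ia_hom (A B : interior_algebra) (h : A -> B) : Prop :=
  [/\ forall x y, h (x `&` y) = h x `&` h y,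
      forall x y, h (x `|` y) = h x `|` h y,
      forall x, h (~` x) = ~` h x,
      h \bot = \bot /\ h \top = \top &
      forall x, h (ia_g x) = ia_g (h x)].

Definition surjective (X Y : Type) (f : X -> Y) : Prop := forall y, exists x, f x = y.

(** Terms and equations in the language of interior algebras; a variety is
    an equational class (Birkhoff), given by a set E of equations. *)
Inductive term : Type :=
  | TVar of nat
  | TMeet of term & term
  | TJoin of term & term
  | TCompl of term
  | TBot | TTop
  | TInt of term.

Fixpoint eval (A : interior_algebra) (v : nat -> A) (t : term) : A :=
  match t with
  | TVar n => v n
  | TMeet t1 t2 => eval v t1 `&` eval v t2
  | TJoin t1 t2 => eval v t1 `|` eval v t2
  | TCompl t1 => ~` eval v t1
  | TBot => \bot
  | TTop => \top
  | TInt t1 => ia_g (eval v t1)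
  end.

Definition in_variety (E : term -> term -> Prop) (A : interior_algebra) : Prop :=
  forall t1 t2, E t1 t2 -> forall v : nat -> A, eval v t1 = eval v t2.

Definition projective_in (E : term -> term -> Prop) (B : interior_algebra) : Prop :=
  in_variety E B /\
  forall (A C : interior_algebra), in_variety E A -> in_variety E C ->
  forall (f : A -> C) (k : B -> C), ia_hom f -> surjective f -> ia_hom k ->
  exists h : B -> A, ia_hom h /\ forall x, f (h x) = k x.

Definition opens (A : interior_algebra) := {x : A | ia_g x == x}.

Section Opens.
Variable A : interior_algebra.

Lemma ia_g_mono (x y : A) : x <= y -> ia_g x <= ia_g y.
Proof. by move=> /meet_l <-; rewrite ia_gM leIr. Qed.

Lemma open_meet (a b : opens A) : ia_g (val a `&` val b) == val a `&` val b.
Proof. by case: a b => a /eqP Ha [b /eqP Hb] /=; rewrite ia_gM Ha Hb. Qed.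

Lemma open_join (a b : opens A) : ia_g (val a `|` val b) == val a `|` val b.
Proof.
case: a b => a /eqP Ha [b /eqP Hb] /=; rewrite eq_le ia_gle /= leUx.
by rewrite -{1}Ha -{2}Hb !ia_g_mono ?leUl ?leUr.
Qed.

Lemma open_bot : ia_g (\bot : A) == \bot.
Proof. by rewrite eq_le ia_gle le0x. Qed.

Lemma open_top : ia_g (\top : A) == \top.
Proof. by rewrite ia_g1. Qed.

Lemma open_imp (a b : opens A) : ia_g (ia_g (~` val a `|` val b)) == ia_g (~` val a `|` val b).
Proof. by rewrite ia_gg. Qed.

Definition omeet (a b : opens A) : opens A := exist (fun x : A => ia_g x == x) _ (open_meet a b).
Definition ojoin (a b : opens A) : opens A := exist (fun x : A => ia_g x == x) _ (open_join a b).
Definition obot : opens A := exist (fun x : A => ia_g x == x) _ open_bot.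
Definition otop : opens A := exist (fun x : A => ia_g x == x) _ open_top.
Definition oimp (a b : opens A) : opens A := exist (fun x : A => ia_g x == x) _ (open_imp a b).
End Opens.

Definition heyting_hom (A C : interior_algebra) (f : opens A -> opens C) : Prop :=
  [/\ forall a b, f (omeet a b) = omeet (f a) (f b),
      forall a b, f (ojoin a b) = ojoin (f a) (f b),
      forall a b, f (oimp a b) = oimp (f a) (f b),
      f (obot A) = obot C & f (otop A) = otop C].

(** O restricted to V (= models of E) is full: every Heyting homomorphism
    O(A) -> O(C) is O(h) (the restriction of h to open elements) for some
    interior-algebra homomorphism h : A -> C. *)
Definition O_full_on (E : term -> term -> Prop) : Prop :=
  forall (A C : interior_algebra), in_variety E A -> in_variety E C ->
  forall f : opens A -> opens C, heyting_hom f ->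
  exists h : A -> C, ia_hom h /\ forall a : opens A, val (f a) = h (val a).

(** O(B) is projective in gamma(V) = { O(A) : A in V }. *)
Definition O_projective_in_gamma (E : term -> term -> Prop) (B : interior_algebra) : Prop :=
  in_variety E B /\
  forall (A C : interior_algebra), in_variety E A -> in_variety E C ->
  forall (f : opens A -> opens C) (k : opens B -> opens C),
  heyting_hom f -> surjective f -> heyting_hom k ->
  exists h : opens B -> opens A, heyting_hom h /\ forall x, f (h x) = k x.

(* Main.v *)
From HB Require Import structures.
Require Import Defs.
From mathcomp Require Import all_boot all_order.
From mathcomp Require Import boolp.
Set Implicit Arguments. Unset Strict Implicit. Unset Printing Implicit Defensive.
Import Order.Theory.
Local Open Scope order_scope.

Section Img.
Variables (A C : interior_algebra) (F : A -> C) (HF : ia_hom F).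

Definition imP (c : C) : bool := `[< exists a, F a = c >].
Definition Im := {c : C | imP c}.
HB.instance Definition _ := Choice.on Im.

Lemma imP_F a : imP (F a). Proof. by apply/asboolP; exists a. Qed.
Lemma imPE (x : Im) : exists a, F a = val x.
Proof. case: x => c Hc /=; exact/asboolP. Qed.

Let d := ia_disp C.

Definition im_meet (x y : Im) : Im.
Proof.
exists (val x `&` val y); have [a <-] := imPE x; have [b <-] := imPE y.
by case: HF => <- *; apply: imP_F.
Defined.
Definition im_join (x y : Im) : Im.
Proof.
exists (val x `|` val y); have [a <-] := imPE x; have [b <-] := imPE y.
by case: HF => _ <- *; apply: imP_F.
Defined.
Definition im_compl (x : Im) : Im.
Proof.
exists (~` val x); have [a <-] := imPE x.
by case: HF => _ _ <- *; apply: imP_F.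
Defined.
Definition im_bot : Im.
Proof. exists \bot; by case: HF => _ _ _ [<- _] _; apply: imP_F. Defined.
Definition im_top : Im.
Proof. exists \top; by case: HF => _ _ _ [_ <-] _; apply: imP_F. Defined.
Definition im_g (x : Im) : Im.
Proof.
exists (ia_g (val x)); have [a <-] := imPE x.
by case: HF => _ _ _ _ <-; apply: imP_F.
Defined.

Definition im_le (x y : Im) := val x <= val y.
Definition im_lt (x y : Im) := val x < val y.

Fact im_le_def x y : im_le x y = (im_meet x y == x).
Proof. by rewrite /im_le -val_eqE /= eq_meetl. Qed.
Fact im_lt_def x y : im_lt x y = (y != x) && im_le x y.
Proof. by rewrite /im_lt /im_le lt_def -val_eqE. Qed.
Fact im_meetC : commutative im_meet.
Proof. by move=> x y; apply: val_inj; rewrite /= meetC. Qed.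
Fact im_joinC : commutative im_join.
Proof. by move=> x y; apply: val_inj; rewrite /= joinC. Qed.
Fact im_meetA : associative im_meet.
Proof. by move=> x y z; apply: val_inj; rewrite /= meetA. Qed.
Fact im_joinA : associative im_join.
Proof. by move=> x y z; apply: val_inj; rewrite /= joinA. Qed.
Fact im_joinKI y x : im_meet x (im_join x y) = x.
Proof. by apply: val_inj; rewrite /= joinKI. Qed.
Fact im_meetKU y x : im_join x (im_meet x y) = x.
Proof. by apply: val_inj; rewrite /= meetKU. Qed.
Fact im_meetUl : left_distributive im_meet im_join.
Proof. by move=> x y z; apply: val_inj; rewrite /= meetUl. Qed.
Fact im_meetxx : idempotent_op im_meet.
Proof. by move=> x; apply: val_inj; rewrite /= meetxx. Qed.

HB.instance Definition _ := @Order.isMeetJoinDistrLattice.Build d Im im_le im_lt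
  im_meet im_join im_le_def im_lt_def im_meetC im_joinC im_meetA im_joinA
  im_joinKI im_meetKU im_meetUl im_meetxx.

Fact im_le0x (x : Im) : im_bot <= x.
Proof. exact: le0x. Qed.
HB.instance Definition _ := @Order.hasBottom.Build d Im im_bot im_le0x.
Fact im_lex1 (x : Im) : x <= im_top.
Proof. exact: lex1. Qed.
HB.instance Definition _ := @Order.hasTop.Build d Im im_top im_lex1.
Fact im_joinxC (x : Im) : x `|` im_compl x = \top.
Proof. by apply: val_inj; rewrite /= joinxC. Qed.
Fact im_meetxC (x : Im) : x `&` im_compl x = \bot.
Proof. by apply: val_inj; rewrite /= meetxC. Qed.
HB.instance Definition _ := @Order.TBDistrLattice_hasComplement.Build d Im im_compl im_joinxC im_meetxC.

Fact im_g1 : im_g \top = \top.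
Proof. by apply: val_inj; rewrite /= ia_g1. Qed.
Fact im_gM x y : im_g (x `&` y) = im_g x `&` im_g y.
Proof. by apply: val_inj; rewrite /= ia_gM. Qed.
Fact im_gle x : im_g x <= x.
Proof. exact: ia_gle. Qed.
Fact im_gg x : im_g (im_g x) = im_g x.
Proof. by apply: val_inj; rewrite /= ia_gg. Qed.

Definition ImA : interior_algebra := @IAlg d Im im_g im_g1 im_gM im_gle im_gg.

Definition im_mk (a : A) : ImA := exist _ (F a) (imP_F a).

Lemma im_eval (v : nat -> ImA) t : val (eval v t) = eval (fun n => val (v n)) t.
Proof. by elim: t => //= [t1 -> t2 -> | t1 -> t2 -> | t1 -> | t1 ->]. Qed.

Lemma image_sub E : in_variety E C ->
  exists (D : interior_algebra) (F' : A -> D) (j : D -> C),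
  [/\ in_variety E D, ia_hom F', surjective F', ia_hom j &
     [/\ injective j, forall a, j (F' a) = F a & forall c, (exists a, F a = c) -> exists x, j x = c]].
Proof.
move=> HC; exists ImA, im_mk, val; split.
- by move=> t1 t2 H v; apply: val_inj; rewrite !im_eval; apply: HC.
- by case: HF => h1 h2 h3 [h4 h5] h6; split; try split; move=> *; apply: val_inj; rewrite /= ?h1 ?h2 ?h3 ?h4 ?h5 ?h6.
- by move=> y; have [a Ha] := imPE y; exists a; apply: val_inj.
- by split.
- split => //; first exact: val_inj.
  by move=> c [a <-]; exists (im_mk a).
Qed.
End Img.

From Stdlib Require Import ClassicalEpsilon.

Lemma open_val (A : interior_algebra) (a : opens A) : ia_g (val a) = val a.
Proof. exact/eqP/(valP a). Qed.

Lemma hom_open (A C : interior_algebra) (H : A -> C) (a : opens A) :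
  ia_hom H -> ia_g (H (val a)) == H (val a).
Proof. by case=> _ _ _ _ h; rewrite -h open_val. Qed.

Theorem lemma5p12 (E : term -> term -> Prop) (B : interior_algebra) :
  O_full_on E -> projective_in E B -> O_projective_in_gamma E B.
Proof.
move=> Hfull [HB Hproj]; split => // A C HA HC f k hf sf hk.
have [F [HF Hf]] := Hfull A C HA HC f hf.
have [D [F' [j [HD HF' sF' Hj [ij jF jS]]]]] := image_sub HF HC.
have ex : forall x : opens B, exists d : D, j d = val (k x).
  move=> x; apply: jS; have [a <-] := sf (k x); exists (val a); by rewrite Hf.
pose kd x := proj1_sig (constructive_indefinite_description _ (ex x)).
have kdE x : j (kd x) = val (k x) := proj2_sig (constructive_indefinite_description _ (ex x)).
have kdo x : ia_g (kd x) == kd x.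
  apply/eqP/ij; case: Hj => _ _ _ _ ->; by rewrite kdE open_val.
pose k' x : opens D := exist _ (kd x) (kdo x).
have hk' : heyting_hom k'.
  case: hk => k1 k2 k3 k4 k5; case: Hj => j1 j2 j3 [j4 j5] j6.
  split.
  - by move=> a b; apply: val_inj; apply: ij; rewrite /= j1 !kdE k1.
  - by move=> a b; apply: val_inj; apply: ij; rewrite /= j2 !kdE k2.
  - by move=> a b; apply: val_inj; apply: ij; rewrite /= j6 j2 j3 !kdE k3.
  - by apply: val_inj; apply: ij; rewrite /= j4 kdE k4.
  - by apply: val_inj; apply: ij; rewrite /= j5 kdE k5.
have [K [HK HKk]] := Hfull B D HB HD k' hk'.
have [H [HH HHK]] := Hproj A D HA HD F' K HF' sF' HK.
pose h x : opens A := exist _ (H (val x)) (hom_open x HH).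
exists h; split.
- have [h1 h2 h3 [h4 h5] h6] := HH; split.
  + by move=> a b; apply: val_inj; rewrite /= h1.
  + by move=> a b; apply: val_inj; rewrite /= h2.
  + by move=> a b; apply: val_inj; rewrite /= h6 h2 h3.
  + by apply: val_inj; rewrite /= h4.
  + by apply: val_inj; rewrite /= h5.
- move=> x; apply: val_inj; rewrite Hf /= -jF HHK -HKk /=; exact: kdE.
Qed.
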